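(* Let $(S,H)$ be a Brill–Noether general K3 surface of degree $10$ ($H$ very ample, $H^2=10$), and let $(\omega,\beta)$ range over pairs of classes in $\mathrm{NS}(S)_{\mathbb Q}$ with $\omega$ ample. Then the equation $$Z_{\omega,\beta}(r,\Delta,s)=Z_{\omega,\beta}(-4r-5s-2\Delta\cdot H,\ (2r+2s+\Delta\cdot H)H-\Delta,\ -5r-4s-2\Delta\cdot H)$$ holds for all $(r,\Delta,s)\in N(S)$ if and only if $\omega=\tfrac15H$ and $\beta=-\tfrac25H$; and the equation $$Z_{\omega,\beta}(r,\Delta,s)=Z_{\omega,\beta}(-9r-5s-3\Delta\cdot H,\ (6r+3s+2\Delta\cdot H)H-\Delta,\ -20r-9s-6\Delta\cdot H)$$ holds for all $(r,\Delta,s)\in N(S)$ if and only if $\omega=\tfrac15H$ and $\beta=-\tfrac35H$.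
   Context: $N(S)=H^0(S,\mathbb Z)\oplus\mathrm{NS}(S)\oplus H^4(S,\mathbb Z)$ with elements $(r,\Delta,s)$, and $Z_{\omega,\beta}(r,\Delta,s)=\tfrac12(2\beta\cdot\Delta-2s+r(\omega^2-\beta^2))+\sqrt{-1}(\Delta-r\beta)\cdot\omega$. *)

(* Defs.v *)
From HB Require Import structures.
From mathcomp Require Import all_boot all_order all_algebra.
Set Implicit Arguments. Unset Strict Implicit. Unset Printing Implicit Defensive.
Import Order.TTheory GRing.Theory Num.Theory.
Local Open Scope ring_scope.

(* Lattice model of NS(S): NS(S) = Z^n with integral Gram matrix G of the
   intersection form; NS(S)_Q = Q^n.  Row vectors. *)

Definition toQ n (v : 'rV[int]_n) : 'rV[rat]_n := map_mx (fun z : int => z%:~R) v.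

Definition qform n (G : 'M[int]_n) (x y : 'rV[rat]_n) : rat :=
  (x *m map_mx (fun z : int => z%:~R) G *m y^T) 0 0.

Definition iform n (G : 'M[int]_n) (x y : 'rV[int]_n) : int :=
  (x *m G *m y^T) 0 0.

(* Z_{omega,beta}(r,Delta,s) as the pair (real part, imaginary part):
   1/2(2 beta.Delta - 2s + r(omega^2 - beta^2)) + i (Delta - r beta).omega *)
Definition Zc n (G : 'M[int]_n) (om be : 'rV[rat]_n)
    (r : int) (D : 'rV[int]_n) (s : int) : rat * rat :=
  ((2 * qform G be (toQ D) - 2 * s%:~R + r%:~R * (qform G om om - qform G be be)) / 2,
   qform G (toQ D - r%:~R *: be) om).

(* An abstract "ample" predicate on NS(S)_Q, subject to properties that
   the ample cone of (S,H) satisfies: H is ample, and every ample class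
   omega has omega^2 > 0 and omega.H > 0. *)
Definition ample_axioms n (G : 'M[int]_n) (H : 'rV[int]_n)
    (ample : 'rV[rat]_n -> Prop) : Prop :=
  ample (toQ H) /\
  (forall om, ample om -> 0 < qform G om om /\ 0 < qform G om (toQ H)).

Definition K3_NS_data n (G : 'M[int]_n) (H : 'rV[int]_n) : Prop :=
  G^T = G /\ (forall i, (2 %| G i i)%Z) /\ \det G != 0 /\ iform G H H = 10.

(* Main.v *)
Require Import Defs.
From HB Require Import structures.
From mathcomp Require Import all_boot all_order all_algebra.
From mathcomp Require Import ring lra.
Import Order.TTheory GRing.Theory Num.Theory.
Local Open Scope ring_scope.

Section Helpers.
Variables (n : nat) (G : 'M[int]_n).

Lemma toQD (x y : 'rV[int]_n) : toQ (x + y) = toQ x + toQ y.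
Proof. by apply/matrixP => i j; rewrite !mxE rmorphD. Qed.
Lemma toQN (x : 'rV[int]_n) : toQ (- x) = - toQ x.
Proof. by apply/matrixP => i j; rewrite !mxE rmorphN. Qed.
Lemma toQZ (k : int) (x : 'rV[int]_n) : toQ (k *: x) = k%:~R *: toQ x.
Proof. by apply/matrixP => i j; rewrite !mxE intrM. Qed.
Lemma toQ0 : toQ (0 : 'rV[int]_n) = 0.
Proof. by apply/matrixP => i j; rewrite !mxE. Qed.

Lemma qformDl (x y z : 'rV[rat]_n) : qform G (x + y) z = qform G x z + qform G y z.
Proof. by rewrite /qform !mulmxDl !mxE. Qed.
Lemma qformNl (x z : 'rV[rat]_n) : qform G (- x) z = - qform G x z.
Proof. by rewrite /qform !mulNmx !mxE. Qed.
Lemma qformZl (a : rat) (x z : 'rV[rat]_n) : qform G (a *: x) z = a * qform G x z.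
Proof. by rewrite /qform -!scalemxAl !mxE. Qed.
Lemma qformDr (x y z : 'rV[rat]_n) : qform G z (x + y) = qform G z x + qform G z y.
Proof. by rewrite /qform linearD /= mulmxDr !mxE. Qed.
Lemma qformNr (x z : 'rV[rat]_n) : qform G z (- x) = - qform G z x.
Proof. by rewrite /qform linearN /= mulmxN !mxE. Qed.
Lemma qformZr (a : rat) (x z : 'rV[rat]_n) : qform G z (a *: x) = a * qform G z x.
Proof. by rewrite /qform linearZ /= -!scalemxAr !mxE. Qed.
Lemma qform0r x : qform G x 0 = 0.
Proof. by rewrite /qform linear0 mulmx0 mxE. Qed.
Lemma qform0l x : qform G 0 x = 0.
Proof. by rewrite /qform !mul0mx mxE. Qed.

Lemma qformC x y : G^T = G -> qform G x y = qform G y x.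
Proof.
move=> sG; rewrite /qform.
transitivity ((x *m map_mx (fun z : int => z%:~R) G *m y^T)^T 0 0); first by rewrite [RHS]mxE.
rewrite !trmx_mul trmxK mulmxA.
have -> : (map_mx (fun z : int => z%:~R : rat) G)^T = map_mx (fun z : int => z%:~R) G.
  by apply/matrixP=> i j; rewrite !mxE -[G in RHS]sG mxE.
by [].
Qed.

Lemma iformE (D H : 'rV[int]_n) : (iform G D H)%:~R = qform G (toQ D) (toQ H).
Proof.
rewrite /iform /qform /toQ.
rewrite map_trmx -!(map_mxM (intr : {rmorphism int -> rat})).
by rewrite [RHS]mxE.
Qed.

Lemma nondeg0 (w : 'rV[rat]_n) : G^T = G -> \det G != 0 ->
  (forall D : 'rV[int]_n, qform G (toQ D) w = 0) -> w = 0.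
Proof.
move=> sG dG hD.
set Gq := map_mx (fun z : int => z%:~R : rat) G.
have wG : w *m Gq = 0.
  apply/matrixP => i j; rewrite (ord1 i) [RHS]mxE.
  have := hD (delta_mx 0 j); rewrite qformC // /qform.
  have -> : toQ (delta_mx 0 j : 'rV[int]_n) = delta_mx 0 j.
    by apply/matrixP => a b; rewrite !mxE; case: (_ && _).
  by rewrite trmx_delta -colE [X in X = 0 -> _]mxE.
have uG : Gq \in unitmx.
  rewrite unitmxE unitfE /Gq (det_map_mx (intr : {rmorphism int -> rat})) /=.
  by rewrite intr_eq0.
by rewrite -(mulmxK uG w) wG mul0mx.
Qed.

Lemma nondeg (w h : 'rV[rat]_n) (k : rat) : G^T = G -> \det G != 0 ->
  (forall D : 'rV[int]_n, qform G (toQ D) w = qform G (toQ D) h * k) -> w = k *: h.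
Proof.
move=> sG dG hD; apply/eqP; rewrite -subr_eq0; apply/eqP; apply: nondeg0 => // D.
by rewrite qformDr qformNr qformZr hD mulrC subrr.
Qed.

Lemma iform0l (H : 'rV[int]_n) : iform G 0 H = 0.
Proof. by rewrite /iform !mul0mx mxE. Qed.

End Helpers.

Lemma lin_from (x y a b c : rat) : x = y -> a - b = c * (x - y) -> a = b.
Proof. by move=> -> /eqP; rewrite subrr mulr0 subr_eq0 => /eqP. Qed.

Ltac expand := rewrite ?toQD ?toQN ?toQZ ?toQ0 ?qformDl ?qformDr ?qformNl ?qformNr ?qformZl ?qformZr ?qform0l ?qform0r.

Theorem proposition6p2 (n : nat) (G : 'M[int]_n) (H : 'rV[int]_n)
    (ample : 'rV[rat]_n -> Prop) :
  K3_NS_data G H -> ample_axioms G H ample ->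
  forall om be : 'rV[rat]_n, ample om ->
  ((forall (r : int) (D : 'rV[int]_n) (s : int),
      Zc G om be r D s =
      Zc G om be (- 4 * r - 5 * s - 2 * iform G D H)
                 ((2 * r + 2 * s + iform G D H) *: H - D)
                 (- 5 * r - 4 * s - 2 * iform G D H))
   <-> (om = 5%:R^-1 *: toQ H /\ be = - (2%:R / 5%:R) *: toQ H))
  /\
  ((forall (r : int) (D : 'rV[int]_n) (s : int),
      Zc G om be r D s =
      Zc G om be (- 9 * r - 5 * s - 3 * iform G D H)
                 ((6 * r + 3 * s + 2 * iform G D H) *: H - D)
                 (- 20 * r - 9 * s - 6 * iform G D H))
   <-> (om = 5%:R^-1 *: toQ H /\ be = - (3%:R / 5%:R) *: toQ H)).
Proof.
move=> [sG [_ [dG HH]]] [_ amp] om be aom.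
have [q1 q2] := amp om aom.
have hh : qform G (toQ H) (toQ H) = 10 by rewrite -iformE HH.
split; split.
- move=> hyp.
  have eom : om = ((qform G (toQ H) om + 2 * qform G be om) / 2) *: toQ H.
    apply: (@nondeg n G) => // D.
    have := hyp 0 D 0; rewrite /Zc => -[_]; expand; rewrite -?iformE.
    move=> e; apply: (@lin_from _ _ _ _ (1/2) e). field=> //.
  have ebe : be = ((qform G be (toQ H) + 2 - qform G om om + qform G be be) / 2) *: toQ H.
    apply: (@nondeg n G) => // D.
    have := hyp 0 D 0; rewrite /Zc => -[e _]; move: e; expand; rewrite -?iformE.
    rewrite [qform G (toQ D) be]qformC // => e.
    apply: (@lin_from _ _ _ _ (1/2) e); field=> //.
  move: eom ebe.
  set k1 := (X in om = X *: _ -> _).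
  set k2 := (X in be = X *: _ -> _).
  clearbody k1 k2 => eom ebe.
  subst om be.
  have := hyp 0 0 1; rewrite /Zc iform0l => -[e1 e2]; move: e1 e2; expand; rewrite hh.
  move: q1 q2; expand; rewrite hh.
  move=> _ p e1 e2.
  have ek2 : k2 = - (2 / 5).
    have : k1 * (2 + 5 * k2) = 0 by apply: (@lin_from _ _ _ _ (-1/10) e2); field=> //.
    move/eqP; rewrite mulf_eq0 => /orP[/eqP k10|/eqP h2].
      by move: p; rewrite k10 mul0r ltxx.
    by apply/eqP; rewrite -subr_eq0; apply/eqP; rewrite -(mulr0 (1/5)) -h2; field=> //.
  subst k2.
  have ek1 : k1 = 1 / 5.
    have : (k1 - 1/5) * (k1 + 1/5) = 0 by apply: (@lin_from _ _ _ _ (1/25) e1); field=> //.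
    move/eqP; rewrite mulf_eq0 => /orP[/eqP h1|/eqP h1].
      by apply/eqP; rewrite -subr_eq0; apply/eqP.
    have : 0 < k1 + 1/5 by lra.
    by rewrite h1 ltxx.
  by rewrite ek1; split; congr (_ *: _); field=> //.
- move=> [-> ->] r D s; rewrite /Zc; expand; rewrite hh.
  rewrite ?[qform G (toQ H) (toQ D)]qformC // -?iformE.
  congr (_, _); field=> //.
- move=> hyp.
  have eom : om = ((2 * qform G (toQ H) om + 3 * qform G be om) / 2) *: toQ H.
    apply: (@nondeg n G) => // D.
    have := hyp 0 D 0; rewrite /Zc => -[_]; expand; rewrite -?iformE.
    move=> e; apply: (@lin_from _ _ _ _ (1/2) e). field=> //.
  have ebe : be = ((4 * qform G be (toQ H) + 12 - 3 * qform G om om + 3 * qform G be be) / 4) *: toQ H.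
    apply: (@nondeg n G) => // D.
    have := hyp 0 D 0; rewrite /Zc => -[e _]; move: e; expand; rewrite -?iformE.
    rewrite [qform G (toQ D) be]qformC // => e.
    apply: (@lin_from _ _ _ _ (1/2) e); field=> //.
  move: eom ebe.
  set k1 := (X in om = X *: _ -> _).
  set k2 := (X in be = X *: _ -> _).
  clearbody k1 k2 => eom ebe.
  subst om be.
  have := hyp 0 0 1; rewrite /Zc iform0l => -[e1 e2]; move: e1 e2; expand; rewrite hh.
  move: q1 q2; expand; rewrite hh.
  move=> _ p e1 e2.
  have ek2 : k2 = - (3 / 5).
    have : k1 * (3 + 5 * k2) = 0 by apply: (@lin_from _ _ _ _ (-1/10) e2); field=> //.
    move/eqP; rewrite mulf_eq0 => /orP[/eqP k10|/eqP h2].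
      by move: p; rewrite k10 mul0r ltxx.
    by apply/eqP; rewrite -subr_eq0; apply/eqP; rewrite -(mulr0 (1/5)) -h2; field=> //.
  subst k2.
  have ek1 : k1 = 1 / 5.
    have : (k1 - 1/5) * (k1 + 1/5) = 0 by apply: (@lin_from _ _ _ _ (1/25) e1); field=> //.
    move/eqP; rewrite mulf_eq0 => /orP[/eqP h1|/eqP h1].
      by apply/eqP; rewrite -subr_eq0; apply/eqP.
    have : 0 < k1 + 1/5 by lra.
    by rewrite h1 ltxx.
  by rewrite ek1; split; congr (_ *: _); field=> //.
- move=> [-> ->] r D s; rewrite /Zc; expand; rewrite hh.
  rewrite ?[qform G (toQ H) (toQ D)]qformC // -?iformE.
  congr (_, _); field=> //.
Qed.
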